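(* Let $k\ge2$. The first-order group formula $\alpha(x)=\forall y\,([y^{-1}xy,x]=e)$ defines in $BS(1,k)$ the subgroup $A$, i.e. $\{g\in BS(1,k): BS(1,k)\models\alpha(g)\}=A$.
   Context: $BS(1,k)=\langle a,b\mid b^{-1}ab=a^k\rangle$, identified with $\mathbb{Z}[1/k]\rtimes\mathbb{Z}$ (pairs $(y,m)$, product $(y_1,m_1)(y_2,m_2)=(y_1+y_2k^{-m_1},m_1+m_2)$), with $a=(1,0)$, $b=(0,1)$. $A$ is the normal closure of $a$, equal to $\{(y,0):y\in\mathbb{Z}[1/k]\}$. The commutator is $[x,y]=x^{-1}y^{-1}xy$. *)

(* Defs.v *)
(* BS(1,k) realised as Z[1/k] ⋊ Z inside rat * int. *)
From HB Require Import structures.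
From mathcomp Require Import all_boot all_order all_algebra.
Set Implicit Arguments. Unset Strict Implicit. Unset Printing Implicit Defensive.
Import Order.TTheory GRing.Theory Num.Theory.
Local Open Scope ring_scope.

Definition inZk (k : nat) (q : rat) : Prop :=
  exists (z : int) (n : nat), q = z%:~R / (k%:R ^+ n).

Definition inBS (k : nat) (g : rat * int) : Prop := inZk k g.1.

Definition bs_mul (k : nat) (g h : rat * int) : rat * int :=
  (g.1 + h.1 * (k%:R : rat) ^ (- g.2), g.2 + h.2).

Definition bs_inv (k : nat) (g : rat * int) : rat * int :=
  (- (g.1 * (k%:R : rat) ^ g.2), - g.2).

Definition bs_one : rat * int := (0, 0).

Definition bs_comm (k : nat) (x y : rat * int) : rat * int :=
  bs_mul k (bs_mul k (bs_mul k (bs_inv k x) (bs_inv k y)) x) y.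

Definition inA (k : nat) (g : rat * int) : Prop := inBS k g /\ g.2 = 0.

Definition alpha (k : nat) (x : rat * int) : Prop :=
  forall y, inBS k y -> bs_comm k (bs_mul k (bs_mul k (bs_inv k y) x) y) x = bs_one.

(* Main.v *)
Require Import Defs.
From mathcomp Require Import all_boot all_order all_algebra.
From mathcomp Require Import ring.
Import GRing.Theory Num.Theory.
Local Open Scope ring_scope.
Lemma alg {u a : rat} : u != 0 ->
  - ((-1 + a + u^-1) * u) + - (a * u) * u + (-1 + a + u^-1) * (u * u) + a * u = 0 -> u = 1.
Proof.
move=> u0 H.
have : - (u - 1) ^+ 2 = 0 by rewrite -H; field.
by move/eqP; rewrite oppr_eq0 sqrf_eq0 subr_eq0 => /eqP.
Qed.
Lemma fw k (a:rat) m : (2 <= k)%N -> bs_comm k (bs_mul k (bs_mul k (bs_inv k (1,0)) (a,m)) (1,0)) (a,m) = bs_one -> m = 0.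
Proof.
move=> hk.
rewrite /bs_comm /bs_mul /bs_inv /bs_one /=.
rewrite ?addr0 ?add0r ?opprK ?subr0 ?oppr0 ?expr0z ?mulr1 ?mul1r.
case=> H _.
have K0 : (k%:R : rat) != 0 by rewrite pnatr_eq0; case: k hk {H}.
have K1 : (k%:R : rat) != 1 by rewrite pnatr_eq1; case: k hk {H K0} => [|[]].
have E2 : - (- m - m) = m + m by ring.
have E : - (- m - m + m) = m by ring.
move: H; rewrite E E2 expfzDr // -invr_expz.
have u0 : (k%:R : rat) ^ m != 0 by rewrite expfz_eq0 negb_and K0 orbT.
move/(alg u0).
case: m {E E2 u0} => n.
- rewrite -exprnP => /eqP; rewrite pexprn_eq1 ?ler0n // (negbTE K1) orbF.
  by move/eqP=> ->.
- rewrite NegzE -exprnN => /eqP; rewrite invr_eq1 pexprn_eq1 ?ler0n // (negbTE K1) orbF.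
  by [].
Qed.
Lemma bw k (a b:rat) n : bs_comm k (bs_mul k (bs_mul k (bs_inv k (b,n)) (a,0)) (b,n)) (a,0) = bs_one.
Proof.
rewrite /bs_comm /bs_mul /bs_inv /bs_one /=.
rewrite ?addr0 ?addNr ?opprK ?subr0 ?oppr0 ?addr0 ?expr0z ?mulr1 ?addNr ?addr0 ?expr0z ?mulr1.
congr (_, _). ring.
Qed.

Theorem lemma4p4 (k : nat) (hk : (2 <= k)%N) (g : rat * int) :
  inBS k g -> (alpha k g <-> inA k g).
Proof.
case: g => a m Hg; split.
- move=> Ha; split => //=.
  apply: (@fw k a m hk); apply: Ha.
  by exists 1, 0%N; rewrite /= expr0 divr1.
- case=> _ /= ->; case=> b n _; exact: bw.
Qed.
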